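(* Let $0<\epsilon_1,\epsilon_2<1$ and, for $n,d$, let $m=\frac{2}{\epsilon_1}\log^3\frac{15n}{\epsilon_2 d}$. There exist $c>0$ and a sufficiently large $K$ such that the following holds for all $n$ and $d$ with $n/d>K$. If $G$ is an $n$-vertex graph with $\delta(G)=d$ that contains no $K_{cd}^{(3)}$-immersion, then $G$ is $(dm^x, d^2m^x, d/2)$-dense for every integer $0<x<100$.
   Context: All logarithms are natural. $d(G)$ is the average degree, $\delta(G)$ the minimum degree. For $W\subseteq E(G)$ and $U\subseteq V(G)$, $G\setminus W-U$ is the graph obtained by deleting the edges of $W$ and the vertices of $U$. A graph $G$ is $(s,t,\gamma)$-dense if for every $U\subseteq V(G)$ with $|U|\leq s$ and every $W\subseteq E(G)$ with $|W|\leq t$ we have $d(G\setminus W-U)\geq\gamma$. An $H$-immersion is an injective map $\phi:V(H)\to V(G)$ with, for each $uv\in E(H)$, a $\phi(u)$–$\phi(v)$ path $P_{uv}$, the paths pairwise edge-disjoint; a $K_t^{(\ell)}$-immersion is a $K_t$-immersion in which all these paths have length exactly $\ell+1$. Floors are omitted. *)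

(* Defs.v *)
From HB Require Import structures.
From mathcomp Require Import all_boot all_order all_algebra.
From mathcomp Require Import all_classical all_reals all_analysis.
Set Implicit Arguments. Unset Strict Implicit. Unset Printing Implicit Defensive.
Import Order.TTheory GRing.Theory Num.Theory.
Local Open Scope ring_scope.

Definition simple_graph (T : finType) (e : rel T) : Prop :=
  symmetric e /\ irreflexive e.

Definition edges (T : finType) (e : rel T) : {set {set T}} :=
  [set f : {set T} | [exists x, exists y, e x y && (f == [set x; y])]].

Definition deg (T : finType) (e : rel T) (v : T) : nat := #|[set u | e v u]|.

(* Minimum degree (0 for the empty graph). *)
Definition mindeg (T : finType) (e : rel T) : nat :=
  \big[minn/#|T|]_(v : T) deg e v.

Definition del_edges (T : finType) (e : rel T) (W : {set {set T}}) (U : {set T})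
  : {set {set T}} :=
  [set f in edges e | (f \notin W) && [disjoint f & U]].

Definition avgdeg_del (R : realType) (T : finType) (e : rel T)
  (W : {set {set T}}) (U : {set T}) : R :=
  if #|~: U| == 0%N then 0
  else (2 * #|del_edges e W U|)%:R / (#|~: U|)%:R.

Definition stg_dense (R : realType) (T : finType) (e : rel T) (s t gamma : R) : Prop :=
  forall (U : {set T}) (W : {set {set T}}),
    W \subset edges e -> (#|U|%:R <= s) -> (#|W|%:R <= t) ->
    gamma <= avgdeg_del R e W U.

Definition walk_edges (T : finType) (s : seq T) : {set {set T}} :=
  [set f : {set T} | has (fun x : T * T => f == [set x.1; x.2]) (zip s (behead s))].

Definition is_path_len (T : finType) (e : rel T) (a b : T) (len : nat) (p : seq T) : Prop :=
  [/\ p != [::], head a p = a, last a p = b,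
      path e a (behead p) & uniq p /\ size p = len.+1].

(* K_t^{(l)}-immersion: injective phi : 'I_t -> V(G) and, for every pair i < j,
   a phi i -- phi j path of length exactly l+1, pairwise edge-disjoint. *)
Definition has_Kt_l_immersion (T : finType) (e : rel T) (t l : nat) : Prop :=
  exists (phi : 'I_t -> T) (P : 'I_t -> 'I_t -> seq T),
    injective phi /\
    (forall i j : 'I_t, (i < j)%N -> is_path_len e (phi i) (phi j) l.+1 (P i j)) /\
    (forall i j i' j' : 'I_t, (i < j)%N -> (i' < j')%N -> (i, j) <> (i', j') ->
       [disjoint walk_edges (P i j) & walk_edges (P i' j')]).

(* Main.v *)
Require Import Defs.
From HB Require Import structures.
From mathcomp Require Import all_boot all_order all_algebra.
From mathcomp Require Import all_classical all_reals all_analysis.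
From mathcomp Require Import zify ring lra.
Set Implicit Arguments. Unset Strict Implicit. Unset Printing Implicit Defensive.

Lemma in_set2_eq (T : finType) (x a b : T) : (x \in [set a; b]) = (x == a) || (x == b).
Proof. by rewrite !inE. Qed.

Lemma set2C (T : finType) (a b : T) : [set a; b] = [set b; a].
Proof. by apply/setP => z; rewrite !inE orbC. Qed.

Lemma we5 (T : finType) (a b c d g : T) f :
  (f \in walk_edges [:: a; b; c; d; g]) =
  [|| f == [set a; b], f == [set b; c], f == [set c; d] | f == [set d; g]].
Proof. by rewrite inE /= orbF. Qed.

Lemma uniq_ord_size t (s : seq 'I_t) : uniq s -> size s <= t.
Proof. by move=> us; rewrite -(card_uniqP us); apply: leq_trans (max_card _) _; rewrite card_ord. Qed.

Section Greedy.
Variables (T : finType) (e : rel T) (U : {set T}) (t : nat) (phi : 'I_t -> T).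
Hypothesis esym : symmetric e.
Hypothesis phi_inj : injective phi.
Hypothesis phiU : forall i, phi i \in U.
Definition codeg (u w : T) := #|[set b in ~: U | e u b && e w b]|.
Hypothesis avail : forall (i j : 'I_t) (O : {set T}), (i < j)%N -> #|O| <= t ->
  exists y, [/\ y \notin O, y \in U, y \notin codom phi,
     5 * t <= codeg (phi i) y & 5 * t <= codeg (phi j) y].

Definition pth (q : 'I_t * 'I_t) (z : T * T * T) : seq T :=
  [:: phi q.1; z.1.1; z.1.2; z.2; phi q.2].

Definition goodz (q : 'I_t * 'I_t) (z : T * T * T) :=
  [/\ z.1.1 \notin U, z.2 \notin U, z.1.2 \in U, z.1.2 \notin codom phi &
      (z.1.1 != z.2 /\
      [/\ e (phi q.1) z.1.1, e z.1.1 z.1.2, e z.1.2 z.2 & e z.2 (phi q.2)])].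

Definition inv (s : seq ('I_t * 'I_t)) (f : 'I_t * 'I_t -> T * T * T) :=
  [/\ forall q, q \in s -> goodz q (f q),
      forall q1 q2, q1 \in s -> q2 \in s -> q1 != q2 ->
        [disjoint walk_edges (pth q1 (f q1)) & walk_edges (pth q2 (f q2))] &
      forall y, count (fun q => (f q).1.2 == y) s <= t].

Definition Fs (s : seq ('I_t * 'I_t)) (f : 'I_t * 'I_t -> T * T * T) (v : T) :=
  [set b | has (fun q => [set v; b] \in walk_edges (pth q (f q))) s].

Lemma set2_eq_l (x b u w : T) : [set x; b] = [set u; w] -> (x == u) || (x == w).
Proof. by move=> H; rewrite -in_set2_eq -H !inE eqxx. Qed.
Lemma set2_eq_r (x b u w : T) : [set x; b] = [set u; w] -> (b == u) || (b == w).
Proof. by move=> H; rewrite -in_set2_eq -H !inE eqxx orbT. Qed.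

Lemma notU_neq x y : x \in U -> y \notin U -> (x == y) = false.
Proof. by move=> xU yU; apply/negbTE; apply: contraNneq yU => <-. Qed.

Lemma notU_neq' x y : x \in U -> y \notin U -> (y == x) = false.
Proof. by move=> xU yU; rewrite eq_sym notU_neq. Qed.

Lemma F_branch s f i b : (forall q, q \in s -> goodz q (f q)) ->
  b \notin U -> b \in Fs s f (phi i) ->
  b \in [seq (f q).1.1 | q <- s & q.1 == i] ++ [seq (f q).2 | q <- s & q.2 == i].
Proof.
move=> Hg bU; rewrite inE => /hasP [q qs]; rewrite we5.
have [b1U b2U yU ycod _] := Hg q qs.
have Hpi := phiU i.
case/or4P => /eqP H.
- have := set2_eq_l H; rewrite (notU_neq Hpi b1U) orbF => /eqP /phi_inj Hi.
  have := set2_eq_r H; rewrite (notU_neq' (phiU _) bU) /= => /eqP ->.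
  by rewrite mem_cat; apply/orP; left; apply: map_f; rewrite mem_filter Hi eqxx.
- have := set2_eq_l H; rewrite (notU_neq Hpi b1U) /= => /eqP Hy.
  by move: ycod; rewrite -Hy codom_f.
- have := set2_eq_l H; rewrite (notU_neq Hpi b2U) orbF => /eqP Hy.
  by move: ycod; rewrite -Hy codom_f.
- have := set2_eq_l H; rewrite (notU_neq Hpi b2U) /= => /eqP /phi_inj Hi.
  have := set2_eq_r H; rewrite (notU_neq' (phiU _) bU) orbF => /eqP ->.
  by rewrite mem_cat; apply/orP; right; apply: map_f; rewrite mem_filter Hi eqxx.
Qed.

Lemma F_center s f y b : (forall q, q \in s -> goodz q (f q)) ->
  y \in U -> y \notin codom phi -> b \notin U -> b \in Fs s f y ->
  b \in [seq (f q).1.1 | q <- s & (f q).1.2 == y] ++ [seq (f q).2 | q <- s & (f q).1.2 == y].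
Proof.
move=> Hg Uy cy bU; rewrite inE => /hasP [q qs]; rewrite we5.
have [b1U b2U yU ycod _] := Hg q qs.
case/or4P => /eqP H.
- have := set2_eq_l H; rewrite (notU_neq Uy b1U) orbF => /eqP Hy.
  by move: cy; rewrite Hy codom_f.
- have := set2_eq_l H; rewrite (notU_neq Uy b1U) /= => /eqP Hy.
  have := set2_eq_r H; rewrite (notU_neq' yU bU) orbF => /eqP ->.
  by rewrite mem_cat; apply/orP; left; apply: map_f; rewrite mem_filter Hy eqxx.
- have := set2_eq_l H; rewrite (notU_neq Uy b2U) orbF => /eqP Hy.
  have := set2_eq_r H; rewrite (notU_neq' yU bU) /= => /eqP ->.
  by rewrite mem_cat; apply/orP; right; apply: map_f; rewrite mem_filter Hy eqxx.
- have := set2_eq_l H; rewrite (notU_neq Uy b2U) /= => /eqP Hy.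
  by move: cy; rewrite Hy codom_f.
Qed.


Lemma count_fst_le (s : seq ('I_t * 'I_t)) i : uniq s -> count (fun q => q.1 == i) s <= t.
Proof.
move=> us; rewrite -size_filter -(size_map snd); apply: uniq_ord_size.
rewrite map_inj_in_uniq ?filter_uniq // => [[a b] [c d]]; rewrite !mem_filter /=.
by move=> /andP[/eqP-> _] /andP[/eqP-> _] /= ->.
Qed.
Lemma count_snd_le (s : seq ('I_t * 'I_t)) i : uniq s -> count (fun q => q.2 == i) s <= t.
Proof.
move=> us; rewrite -size_filter -(size_map fst); apply: uniq_ord_size.
rewrite map_inj_in_uniq ?filter_uniq // => [[a b] [c d]]; rewrite !mem_filter /=.
by move=> /andP[/eqP-> _] /andP[/eqP-> _] /= ->.
Qed.

Lemma sum_count (s : seq ('I_t * 'I_t)) (c : 'I_t * 'I_t -> T) :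
  \sum_(y : T) count (fun q => c q == y) s = size s.
Proof.
elim: s => [|q s IH] /=; first by rewrite big1.
rewrite big_split /= IH (bigD1 (c q)) //= eqxx big1 ?add1n ?addn0 // => y /negbTE.
by rewrite eq_sym => ->.
Qed.

Lemma size_pairs (s : seq ('I_t * 'I_t)) : uniq s -> size s <= t * t.
Proof.
move=> us; rewrite -(card_uniqP us); apply: leq_trans (max_card _) _.
by rewrite card_prod card_ord.
Qed.

Lemma disj_new s f p b y b' q :
  b \notin Fs s f (phi p.1) -> b \notin Fs s f y -> b' \notin Fs s f y ->
  b' \notin Fs s f (phi p.2) -> q \in s ->
  [disjoint walk_edges (pth p (b, y, b')) & walk_edges (pth q (f q))].
Proof.
move=> H1 H2 H3 H4 qs; rewrite disjoint_subset; apply/fintype.subsetP => x.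
rewrite we5 /= => /or4P [] /eqP ->; rewrite inE; apply/negP => Hq.
- by case/negP: H1; rewrite inE; apply/hasP; exists q.
- by case/negP: H2; rewrite inE; apply/hasP; exists q; move: Hq; rewrite set2C.
- by case/negP: H3; rewrite inE; apply/hasP; exists q.
- by case/negP: H4; rewrite inE; apply/hasP; exists q; move: Hq; rewrite set2C.
Qed.

Lemma step (s : seq ('I_t * 'I_t)) f (p : 'I_t * 'I_t) : uniq (p :: s) -> (p.1 < p.2)%N -> inv s f ->
  exists f', inv (p :: s) f'.
Proof.
move=> /andP[ps us] lt [Hg Hd Hl].
have tpos : 0 < t by apply: leq_ltn_trans (ltn_ord p.1).
set O := [set y | t <= count (fun q => (f q).1.2 == y) s].
have cO : #|O| <= t.
  have : #|O| * t <= t * t.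
    apply: leq_trans (size_pairs us).
    rewrite -(sum_count s (fun q => (f q).1.2)) -sum1_card big_distrl /=.
    apply: leq_trans (_ : \sum_(y in O) count (fun q => (f q).1.2 == y) s <= _).
      by apply: leq_sum => y; rewrite inE mul1n.
    by rewrite [X in _ <= X](bigID (fun y => y \in O)) /= leq_addr.
  by rewrite leq_pmul2r.
have [y [yO yU ycod c1 c2]] := avail lt cO.
have ly : count (fun q => (f q).1.2 == y) s < t by move: yO; rewrite inE -ltnNge.
set Sy := [seq (f q).1.1 | q <- s & (f q).1.2 == y] ++ [seq (f q).2 | q <- s & (f q).1.2 == y].
have sSy : size Sy < 2 * t by rewrite size_cat !size_map !size_filter; lia.
set Sa := [seq (f q).1.1 | q <- s & q.1 == p.1] ++ [seq (f q).2 | q <- s & q.2 == p.1].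
have sSa : size Sa <= 2 * t.
  by rewrite size_cat !size_map !size_filter mul2n -addnn; apply: leq_add; [exact: count_fst_le | exact: count_snd_le].
set Sb := [seq (f q).1.1 | q <- s & q.1 == p.2] ++ [seq (f q).2 | q <- s & q.2 == p.2].
have sSb : size Sb <= 2 * t.
  by rewrite size_cat !size_map !size_filter mul2n -addnn; apply: leq_add; [exact: count_fst_le | exact: count_snd_le].
have [b /and3P [Hb Hb1 Hb2]] : exists b, [&& b \in [set b in ~: U | e (phi p.1) b && e y b],
     b \notin Fs s f (phi p.1) & b \notin Fs s f y].
  case: (pickP (fun b => [&& b \in [set b in ~: U | e (phi p.1) b && e y b],
     b \notin Fs s f (phi p.1) & b \notin Fs s f y])) => [b Hb | H]; first by exists b.
  have sub : [set b in ~: U | e (phi p.1) b && e y b] \subset [set x in Sa ++ Sy].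
    apply/fintype.subsetP => x Hx; rewrite inE mem_cat; move: (H x); rewrite /= Hx /= => /negbT; rewrite negb_and !negbK.
    have xU : x \notin U by move: Hx; rewrite !inE => /andP[].
    case/orP => Hf; apply/orP; [left; exact: F_branch | right; exact: F_center].
  have H2 := subset_leq_card sub; rewrite [X in _ <= X]cardsE in H2.
  have H3 := card_size (Sa ++ Sy).
  have := leq_trans H2 H3; rewrite size_cat.
  by move: c1; rewrite /codeg; lia.
have [b' /and4P [Hb' Hb'1 Hb'2 Hbb]] : exists b', [&& b' \in [set b in ~: U | e (phi p.2) b && e y b],
     b' \notin Fs s f y, b' \notin Fs s f (phi p.2) & b' != b].
  case: (pickP (fun b' => [&& b' \in [set b in ~: U | e (phi p.2) b && e y b],
     b' \notin Fs s f y, b' \notin Fs s f (phi p.2) & b' != b])) => [b' Hb' | H]; first by exists b'.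
  have sub : [set b in ~: U | e (phi p.2) b && e y b] \subset [set x in b :: Sb ++ Sy].
    apply/fintype.subsetP => x Hx; rewrite inE in_cons mem_cat; move: (H x); rewrite /= Hx /= => /negbT; rewrite !negb_and !negbK.
    have xU : x \notin U by move: Hx; rewrite !inE => /andP[].
    case/or3P => Hf; apply/or3P; [apply: Or33; exact: F_center | apply: Or32; exact: F_branch | by apply: Or31].
  have H2 := subset_leq_card sub; rewrite [X in _ <= X]cardsE in H2.
  have H3 := card_size (b :: Sb ++ Sy).
  have := leq_trans H2 H3; rewrite /= size_cat.
  by move: c2; rewrite /codeg; lia.
exists (fun q => if q == p then (b, y, b') else f q).
have fs : forall q, q \in s -> (if q == p then (b, y, b') else f q) = f q.
  by move=> q qs; case: eqP => // E; move: ps; rewrite -E qs.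
move: Hb Hb'; rewrite !inE => /and3P [bU e1 e2] /and3P [b'U e3 e4].
split.
- move=> q; rewrite in_cons => /orP [/eqP -> | qs]; last by rewrite fs //; apply: Hg.
  rewrite eqxx; split => //=; split; first by rewrite eq_sym.
  by split => //; rewrite esym.
- move=> q1 q2; rewrite !in_cons => /orP [/eqP -> | q1s] /orP [/eqP -> | q2s];
    rewrite ?eqxx // => neq.
  + rewrite (fs _ q2s); exact: (disj_new Hb1 Hb2 Hb'1 Hb'2 q2s).
  + rewrite (fs _ q1s) disjoint_sym; exact: (disj_new Hb1 Hb2 Hb'1 Hb'2 q1s).
  + by rewrite (fs _ q1s) (fs _ q2s); apply: Hd.
- move=> y0 /=; rewrite eqxx /= (@eq_in_count _ _ (fun q => (f q).1.2 == y0)); last first.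
    by move=> q qs /=; rewrite fs.
  case: (eqVneq y y0) => [<- | _] /=; first by rewrite add1n.
  by rewrite add0n.
Qed.


Lemma inv_all (s : seq ('I_t * 'I_t)) : uniq s -> all (fun q : 'I_t * 'I_t => q.1 < q.2) s ->
  exists f, inv s f.
Proof.
elim: s => [|p s IH] /=.
  move=> _ _; exists (fun q => (phi q.1, phi q.1, phi q.1)).
  by split => // y.
move=> /andP [ps us] /andP [lt al].
have [f Hf] := IH us al.
by apply: (step _ lt Hf); rewrite /= ps us.
Qed.

Lemma good_path (i j : 'I_t) z : (i < j)%N -> goodz (i, j) z ->
  is_path_len e (phi i) (phi j) 4 (pth (i, j) z).
Proof.
move=> lt [b1U b2U yU ycod [nbb [e1 e2 e3 e4]]].
split => //=; first by rewrite e1 e2 e3 e4.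
split => //.
have ni : phi i != phi j by apply: contraTneq lt => /phi_inj ->; rewrite ltnn.
rewrite !inE !negb_or ni /=.
have n1 : phi i != z.1.1 by rewrite (notU_neq (phiU _) b1U).
have n2 : phi i != z.1.2 by apply: contraNneq ycod => <-; rewrite codom_f.
have n3 : phi i != z.2 by rewrite (notU_neq (phiU _) b2U).
have n4 : z.1.1 != z.1.2 by rewrite (notU_neq' yU b1U).
have n5 : z.1.1 != phi j by rewrite (notU_neq' (phiU _) b1U).
have n6 : z.1.2 != z.2 by rewrite (notU_neq yU b2U).
have n7 : z.1.2 != phi j by apply: contraNneq ycod => ->; rewrite codom_f.
have n8 : z.2 != phi j by rewrite (notU_neq' (phiU _) b2U).
by rewrite n1 n2 n3 n4 n5 nbb n6 n7 n8.
Qed.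

Lemma greedy_imm : has_Kt_l_immersion e t 3.
Proof.
set s := [seq q <- enum {: 'I_t * 'I_t} | (q : 'I_t * 'I_t).1 < q.2].
have us : uniq s by rewrite filter_uniq ?enum_uniq.
have al : all (fun q : 'I_t * 'I_t => q.1 < q.2) s by apply/allP => q; rewrite mem_filter => /andP[].
have [f [Hg Hd _]] := inv_all us al.
have ms : forall i j : 'I_t, (i < j)%N -> (i, j) \in s.
  by move=> i j lt; rewrite mem_filter mem_enum lt.
exists phi, (fun i j => pth (i, j) (f (i, j))); split => //; split.
  by move=> i j lt; apply: good_path => //; apply: Hg; apply: ms.
move=> i j i' j' lt lt' neq; apply: Hd; try exact: ms.
by apply/eqP.
Qed.

End Greedy.


Lemma sum_sub (I : finType) (A B : {pred I}) (F : I -> nat) :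
  {subset A <= B} -> \sum_(i in A) F i <= \sum_(i in B) F i.
Proof.
move=> sAB; rewrite [X in _ <= X](bigID (fun i => i \in A)) /=.
apply: leq_trans (leq_addr _ _); apply: eq_leq; apply: eq_bigl => i.
by rewrite andbC; apply/esym/andb_idr/sAB.
Qed.

Section Count.
Variables (T : finType) (e : rel T).
Hypothesis esymm : symmetric e.
Hypothesis eirr : irreflexive e.

Definition PB (U : {set T}) := [set p : T * T | [&& p.1 \in ~: U, p.2 \in ~: U & e p.1 p.2]].

Lemma card_PB U : #|PB U| = \sum_(b in ~: U) #|[set u | e b u] :\: U|.
Proof.
rewrite -sum1_card big_mkcond /=.
transitivity (\sum_(b in ~: U) \sum_(u : T) ((u \in ~: U) && e b u : nat)).
  rewrite pair_big /= [RHS]big_mkcond /=; apply: eq_bigr => p _.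
  by rewrite !inE andbT; case: (p.1 \in U); case: (p.2 \in U); case: (e _ _).
apply: eq_bigr => b _; rewrite -sum1_card [RHS]big_mkcond /=; apply: eq_bigr => u _.
by rewrite !inE andbC.
Qed.


Lemma fiber2 (x y a b : T) : x != y -> [set x; y] = [set a; b] -> (x, y) \in [set (a, b); (b, a)].
Proof.
move=> nxy H.
have := set2_eq_l H; have := set2_eq_r H.
rewrite !inE !xpair_eqE.
case/orP => /eqP ey; case/orP => /eqP ex; subst; rewrite ?eqxx ?orbT //.
- by move: nxy; rewrite eqxx.
- by move: nxy; rewrite eqxx.
Qed.

Lemma PB_le U W : #|PB U| <= 2 * (#|del_edges e W U| + #|W|).
Proof.
rewrite -sum1_card (partition_big_imset (fun p : T * T => [set p.1; p.2])) /=.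
apply: (@leq_trans (\sum_(f in [set [set p.1; p.2] | p in PB U]) 2)).
  apply: leq_sum => f /imsetP [[a b] Hp ->] /=.
  rewrite sum1_card.
  apply: (@leq_trans #|[set (a, b); (b, a)]|); last by rewrite cards2; case: (_ != _).
  apply: subset_leq_card; apply/fintype.subsetP => [[x y]] Hxy.
  have /andP [Hp' /eqP H] : ((x, y) \in PB U) && ([set x; y] == [set a; b]) := Hxy.
  move: Hp'; rewrite !inE /= => /and3P [_ _ exy].
  by rewrite -in_set2_eq; apply: fiber2 => //; apply: contraTneq exy => ->; rewrite eirr.
rewrite sum_nat_const mulnC leq_mul2l /=.
apply: (@leq_trans #|del_edges e W U :|: W|); last by rewrite cardsU leq_subr.
apply: subset_leq_card; apply/fintype.subsetP => f /imsetP [[x y] Hp ->] /=.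
move: Hp; rewrite !inE /= => /and3P [xU yU exy].
case: (boolP ([set x; y] \in W)) => HW; rewrite ?orbT //.
apply/orP; left; apply/and3P; split => //.
  by apply/existsP; exists x; apply/existsP; exists y; rewrite exy eqxx.
rewrite disjoint_subset; apply/fintype.subsetP => z; rewrite !inE => /orP [] /eqP ->; done.
Qed.

End Count.

Lemma cardsU_le (T : finType) (A B : {set T}) : #|A :|: B| <= #|A| + #|B|.
Proof. by rewrite cardsU leq_subr. Qed.

Section Main.
Variables (T : finType) (e : rel T).
Hypothesis esymm : symmetric e.
Hypothesis eirr : irreflexive e.
Variables (U : {set T}) (W : {set {set T}}) (d L t : nat).
Hypothesis mindeg : forall v, d <= deg e v.
Hypothesis hU : #|U| <= d * L.
Hypothesis hW : #|W| <= d * d * L.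
Hypothesis hL : 0 < L.
Hypothesis hn : 1024 * (d * (L * (L * L))) <= #|T|.
Hypothesis ht : 1000 * t <= d.
Hypothesis htpos : 0 < t.
Hypothesis hE : 4 * #|del_edges e W U| < d * #|~: U|.

Definition degU b := #|[set u | e b u] :&: U|.
Definition beta := #|~: U|.
Definition d0 := d %/ 8.

Lemma beta_big : 1023 * (d * (L * (L * L))) <= beta.
Proof.
have := cardsC U; rewrite /beta => HC.
have : d * L <= d * (L * (L * L)).
  by rewrite leq_mul2l leq_pmulr ?muln_gt0 ?hL // orbT.
lia.
Qed.

Lemma EUB_bound : 7 * (d * beta) < 16 * \sum_(b in ~: U) degU b.
Proof.
have Hdeg : \sum_(b in ~: U) d <= \sum_(b in ~: U) (degU b + #|[set u | e b u] :\: U|).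
  by apply: leq_sum => b _; rewrite /degU cardsID; apply: mindeg.
rewrite sum_nat_const big_split /= -card_PB in Hdeg.
have HP := PB_le eirr U W.
have hb := beta_big.
have h1 : d * (32 * (d * L)) <= d * beta.
  rewrite leq_mul2l; apply/orP; right; apply: leq_trans hb.
  have : L <= L * (L * L) by rewrite leq_pmulr ?muln_gt0 ?hL.
  nia.
move: Hdeg HP hE hW h1; rewrite /beta; nia.
Qed.


Definition B1 := [set b in ~: U | d0 <= degU b].

Lemma d0_le : 8 * d0 <= d.
Proof. by rewrite /d0 mulnC leq_divM. Qed.

Lemma d0_ge : d <= 16 * d0.
Proof. rewrite /d0; have := divn_eq d 8; have := ltn_pmod d (isT : 0 < 8); lia. Qed.

Lemma B1U_bound : d * beta <= 4 * (#|B1| * #|U|).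
Proof.
have H := EUB_bound.
rewrite (bigID (fun b => b \in B1)) /= in H.
have H1 : \sum_(i in ~: U | i \in B1) degU i <= #|B1| * #|U|.
  rewrite (eq_bigl (fun i => i \in B1)); last first.
    by move=> i; rewrite !inE; case: (i \in U); rewrite ?andbF.
  rewrite -sum_nat_const; apply: leq_sum => b _.
  by apply: subset_leq_card; apply: subsetIr.
have H2 : \sum_(i in ~: U | i \notin B1) degU i <= beta * d0.
  apply: (@leq_trans (\sum_(i in ~: U) d0)); last by rewrite sum_nat_const.
  rewrite [X in _ <= X](bigID (fun b => b \in B1)) /=; apply: leq_trans (leq_addl _ _).
  apply: leq_sum => b /andP [bU bB]; move: bB bU; rewrite !inE => bB bU; rewrite bU /= -ltnNge in bB; exact: ltnW.
have := d0_le.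
move: H H1 H2; rewrite /beta; nia.
Qed.


Definition bad u w := (u != w) && (codeg e U u w < 5 * t).
Definition NA b0 := [set u | e b0 u] :&: U.
Definition baddeg (A : {set T}) a := #|[set w in A | bad a w]|.
Definition bp b0 := \sum_(u in NA b0) baddeg (NA b0) u.

Lemma sum_NA b0 (G : T -> nat) : \sum_(u in NA b0) G u = \sum_(u in U) (e b0 u * G u).
Proof.
rewrite big_mkcond [RHS]big_mkcond; apply: eq_bigr => u _; rewrite !inE.
by case: (e b0 u); case: (u \in U); rewrite ?mul1n ?mul0n.
Qed.

Lemma bp_expand b0 : bp b0 = \sum_(u in U) \sum_(w in U) (e b0 u * (e b0 w * bad u w)).
Proof.
rewrite /bp sum_NA; apply: eq_bigr => u _.
rewrite /baddeg -big_distrr /= -sum_NA; congr (_ * _).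
rewrite -sum1_card big_mkcond [RHS]big_mkcond /=; apply: eq_bigr => w _; rewrite [w \in [set _ in _ | _]]inE.
by case: (w \in NA b0); case: (bad u w).
Qed.

Lemma sum_bp : \sum_(b0 in B1) bp b0 <= #|U| * (#|U| * (5 * t)).
Proof.
apply: (@leq_trans (\sum_(b0 in ~: U) bp b0)).
  by apply: sum_sub => b; rewrite inE => /andP[].
under eq_bigr do rewrite bp_expand.
rewrite exchange_big /=.
under eq_bigr do rewrite exchange_big /=.
rewrite -sum_nat_const; apply: leq_sum => u uU.
rewrite -sum_nat_const; apply: leq_sum => w wU.
have -> : \sum_(b0 in ~: U) (e b0 u * (e b0 w * bad u w)) = bad u w * codeg e U u w.
  rewrite mulnC /codeg -sum1_card big_distrl /= big_mkcond [RHS]big_mkcond /=.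
  apply: eq_bigr => b _; rewrite !inE (esymm b u) (esymm b w).
  by case: (b \in U); case: (e u b); case: (e w b); case: (bad u w).
rewrite /bad; case: (u != w) => /=; last by rewrite mul0n.
by case: ltnP => // h; rewrite mul1n ltnW.
Qed.


Lemma good_b0 : exists b0, b0 \in B1 /\ 50 * bp b0 <= d0 * d0.
Proof.
case: (boolP [exists b0 in B1, 50 * bp b0 <= d0 * d0]) => [/existsP [b0 /andP[H1 H2]] | H].
  by exists b0.
exfalso.
have Hall : forall b0, b0 \in B1 -> d0 * d0 < 50 * bp b0.
  by move=> b1 Hb; rewrite ltnNge; apply: contra H => Hle; apply/existsP; exists b1; rewrite Hb Hle.
have S1 : #|B1| * (d0 * d0).+1 <= 50 * (#|U| * (#|U| * (5 * t))).
  rewrite -sum_nat_const; apply: (@leq_trans (\sum_(b0 in B1) 50 * bp b0)).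
    by apply: leq_sum => b1 Hb; exact: Hall.
  by rewrite -big_distrr /= leq_mul2l sum_bp orbT.
have dpos : 0 < d by lia.
have e1 : d * beta * (d0 * d0).+1 <= 4 * (#|B1| * #|U|) * (d0 * d0).+1.
  by apply: leq_mul (B1U_bound) (leqnn _).
have e3 : 4 * #|U| * (#|B1| * (d0 * d0).+1) <= 4 * #|U| * (50 * (#|U| * (#|U| * (5 * t)))).
  by apply: leq_mul (leqnn _) S1.
have e4 : 1000 * t * (#|U| * (#|U| * #|U|)) <= d * (#|U| * (#|U| * #|U|)).
  by apply: leq_mul ht (leqnn _).
have e5 : #|U| * (#|U| * #|U|) <= (d * L) * ((d * L) * (d * L)).
  by apply: leq_mul hU (leq_mul hU hU).
have e6 : d * (#|U| * (#|U| * #|U|)) <= d * ((d * L) * ((d * L) * (d * L))).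
  by apply: leq_mul (leqnn _) e5.
have e7 : beta * (d0 * d0).+1 <= (d * L) * ((d * L) * (d * L)).
  rewrite -(leq_pmul2l dpos); move: e1 e3 e4 e6; nia.
have e8 : 1023 * (d * (L * (L * L))) * (d0 * d0).+1 <= beta * (d0 * d0).+1.
  by apply: leq_mul beta_big (leqnn _).
have e9 : (d * d) * (d * (L * (L * L))) <= (256 * (d0 * d0)) * (d * (L * (L * L))).
  apply: leq_mul (leqnn _); have := d0_ge; nia.
have Xpos : 0 < d * (L * (L * L)) by rewrite !muln_gt0 dpos hL.
move: e7 e8 e9 Xpos; nia.
Qed.


Lemma comb_main : has_Kt_l_immersion e t 3.
Proof.
have [b0 [Hb0 Hbp]] := good_b0.
set A := NA b0.
have cA : d0 <= #|A| by move: Hb0; rewrite inE => /andP[].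
set A' := [set a in A | 10 * baddeg A a < d0].
have sA' : A' \subset A by apply/fintype.subsetP => a; rewrite inE => /andP[].
have cAA : #|A :\: A'| * d0 <= 10 * bp b0.
  rewrite -sum_nat_const; apply: (@leq_trans (\sum_(a in A :\: A') 10 * baddeg A a)).
    apply: leq_sum => a; rewrite !inE => /andP [Hn Ha]; move: Hn; rewrite Ha /= -leqNgt.
    by [].
  rewrite /bp -big_distrr /= leq_mul2l; apply/orP; right.
  by apply: sum_sub => a; rewrite inE => /andP[].
have d0t : 62 * t <= d0 by have := d0_ge; lia.
have c5 : 5 * #|A :\: A'| <= d0.
  have : 5 * #|A :\: A'| * d0 <= d0 * d0 by move: cAA Hbp; nia.
  by rewrite mulnC leq_pmul2l //; lia.
have cA' : #|A'| + #|A :\: A'| = #|A|.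
  by rewrite -(cardsID A' A); congr (_ + _); rewrite (finset.setIidPr sA').
have tA' : t <= #|A'| by lia.
pose phi (i : 'I_t) := enum_val (widen_ord tA' i).
have phi_inj : injective phi by move=> i j /enum_val_inj /(congr1 val) /= /val_inj.
have phiA' : forall i, phi i \in A' by move=> i; apply: enum_valP.
have AU : forall a, a \in A -> a \in U by move=> a; rewrite !inE => /andP[].
have phiU : forall i, phi i \in U by move=> i; apply: AU; apply: (fintype.subsetP sA'); apply: phiA'.
apply: (greedy_imm esymm phi_inj phiU) => i j O lt cO.
set X := O :|: [set x in codom phi] :|: [set w in A | bad (phi i) w] :|: [set w in A | bad (phi j) w].
have cc : #|[set x in codom phi]| <= t.
  by rewrite cardsE; apply: leq_trans (card_size _) _; rewrite size_codom card_ord.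
have cX : #|X| <= t + t + baddeg A (phi i) + baddeg A (phi j).
  apply: leq_trans (cardsU_le _ _) _; rewrite leq_add2r.
  apply: leq_trans (cardsU_le _ _) _; rewrite leq_add2r.
  by apply: leq_trans (cardsU_le _ _) _; apply: leq_add.
have bi : 10 * baddeg A (phi i) < d0 by have := phiA' i; rewrite inE => /andP[].
have bj : 10 * baddeg A (phi j) < d0 by have := phiA' j; rewrite inE => /andP[].
have cIX : #|A' :&: X| <= #|X| by apply: subset_leq_card; apply: subsetIr.
have : 0 < #|A' :\: X| by have := cardsID X A'; lia.
case/card_gt0P => y; rewrite finset.in_setD => /andP [yX yA'].
have yA : y \in A by apply: (fintype.subsetP sA').
move: yX; rewrite !inE !negb_or => /andP [/andP [/andP [yO ycod] bad1] bad2].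
have yAU : e b0 y && (y \in U) by move: yA; rewrite !inE.
move: bad1 bad2; rewrite yAU /= => bad1 bad2.
exists y; split => //; first exact: AU.
- move: bad1; rewrite /bad negb_and negbK -leqNgt => /orP [/eqP E|] //.
  by move: ycod; rewrite -E codom_f.
- move: bad2; rewrite /bad negb_and negbK -leqNgt => /orP [/eqP E|] //.
  by move: ycod; rewrite -E codom_f.
Qed.

End Main.


Lemma mindeg_le (T : finType) (e : rel T) v : mindeg e <= deg e v.
Proof.
rewrite /mindeg; have : v \in index_enum T by rewrite mem_index_enum.
elim: (index_enum T) => [//|a r IH]; rewrite in_cons big_cons.
case/orP => [/eqP <- | vr]; first by rewrite geq_minl.
by apply: leq_trans (geq_minr _ _) (IH vr).
Qed.

Lemma imm0 (T : finType) (e : rel T) : has_Kt_l_immersion e 0 3.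
Proof.
have f0 : 'I_0 -> T by case.
by exists f0, (fun _ _ => [::]); split; [case | split; case].
Qed.
Import Order.TTheory GRing.Theory Num.Theory.
Local Open Scope ring_scope.

Lemma key {R : realType} (C : R) : exists K : R, 0 < K /\
  forall y, K < y -> C * (ln y) ^+ 891 <= y /\ 1 <= ln y.
Proof.
set l0 := Num.max 1 (C * (892`!)%:R).
exists (expR l0); split; first exact: expR_gt0.
move=> y Hy.
have y0 : 0 < y by apply: lt_trans Hy; apply: expR_gt0.
have Hl : l0 <= ln y.
  by rewrite -[X in X <= _]expRK ler_ln ?posrE ?expR_gt0 // ltW.
have l1 : 1 <= ln y by apply: le_trans Hl; rewrite le_max lexx.
have l2 : C * (892`!)%:R <= ln y by apply: le_trans Hl; rewrite le_max lexx orbT.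
split => //.
have ey : expR (ln y) = y by rewrite lnK ?posrE.
rewrite -[X in _ <= X]ey.
have f0 : 0 < (892`!)%:R :> R by rewrite ltr0n fact_gt0.
apply: le_trans (expR_ge1Dxn 891 (le_trans ler01 l1)).
set l := ln y.
have lp : 0 <= l ^+ 891 by rewrite exprn_ge0 // (le_trans ler01 l1).
apply: le_trans (_ : l ^+ 892 / (892`!)%:R <= _); last by rewrite lerDr.
rewrite ler_pdivlMr // (exprSr l 891) mulrAC [X in _ <= X]mulrC.
by apply: ler_wpM2r.
Qed.

Lemma bound (R : realType) (eps1 eps2 : R) : 0 < eps1 < 1 -> 0 < eps2 < 1 ->
  exists K : R, 0 < K /\ forall r : R, K < r ->
   1 <= 2 / eps1 * (ln (15 * r / eps2)) ^+ 3 /\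
   forall x : nat, (x < 100)%N -> 8192 * ((2 / eps1 * (ln (15 * r / eps2)) ^+ 3) ^+ x) ^+ 3 <= r.
Proof.
move=> /andP [e10 e11] /andP [e20 e21].
set C := 8192 * (2 / eps1) ^+ 297 * (15 / eps2).
have [Kk [Kk0 HK]] := key C.
exists (Kk * eps2 / 15); split; first by rewrite divr_gt0 ?mulr_gt0.
move=> r Hr.
have yK : Kk < 15 * r / eps2.
  by move: Hr; rewrite ltr_pdivrMr // => Hr; rewrite ltr_pdivlMr //; lra.
have [H1 H2] := HK _ yK.
set l := ln (15 * r / eps2) in H1 H2 *.
have e1 : 1 <= 2 / eps1 by rewrite ler_pdivlMr // mul1r; lra.
have l0 : 0 <= l by apply: le_trans H2.
have m1 : 1 <= 2 / eps1 * l ^+ 3 by apply: mulr_ege1 => //; apply: exprn_ege1.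
split => // x x100.
set m := 2 / eps1 * l ^+ 3 in m1 *.
have m0 : 0 <= m by apply: le_trans m1.
have mx : m ^+ x <= m ^+ 99.
  rewrite -(subnKC (_ : (x <= 99)%N)) // exprD ler_peMr ?exprn_ge0 //.
  exact: exprn_ege1.
have mx3 : (m ^+ x) ^+ 3 <= (m ^+ 99) ^+ 3 by rewrite lerXn2r ?nnegrE ?exprn_ge0.
have h8 : (0:R) < 8192 by rewrite ltr0n.
have h1 : 8192 * (m ^+ x) ^+ 3 <= 8192 * (m ^+ 99) ^+ 3 by rewrite ler_pM2l.
apply: (le_trans h1).
have -> : 8192 * (m ^+ 99) ^+ 3 = C * l ^+ 891 * (eps2 / 15).
  rewrite /C /m -exprM exprMn -exprM.
  have -> : (3 * (99 * 3) = 891)%N by [].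
  have -> : (99 * 3 = 297)%N by [].
  move: ((2 / eps1) ^+ 297) (l ^+ 891) => P Q.
  have ne : eps2 != 0 by rewrite gt_eqF.
  by field.
apply: le_trans (_ : 15 * r / eps2 * (eps2 / 15) <= _).
  by rewrite ler_pM2r ?divr_gt0.
have ne : eps2 != 0 by rewrite gt_eqF.
by rewrite le_eqVlt; apply/orP; left; apply/eqP; field.
Qed.

Lemma contra_beta0 (u d L n : nat) : (0 < d)%N -> (0 < L)%N ->
  (1024 * (d * (L * (L * L))) <= n)%N -> (u <= d * L)%N -> u = n -> False.
Proof.
move=> dp Lp hn hu E; subst u.
have : (d * L <= d * (L * (L * L)))%N.
  by rewrite leq_mul2l leq_pmulr ?muln_gt0 ?Lp // orbT.
have : (0 < d * (L * (L * L)))%N by rewrite !muln_gt0 dp Lp.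
lia.
Qed.

Lemma hE_lemma (R : realType) (E b d : nat) : (0:R) < b%:R ->
  (2 * E)%:R / b%:R < d%:R / 2 :> R -> (4 * E < d * b)%N.
Proof.
move=> bp Hlt; rewrite -(ltr_nat R) !natrM; move: Hlt; rewrite ltr_pdivrMr // natrM => Hlt.
lra.
Qed.

Unset Implicit Arguments.

Theorem lemma5p2 (R : realType) (eps1 eps2 : R) :
  0 < eps1 < 1 -> 0 < eps2 < 1 ->
  exists (c : R) (K : R), 0 < c /\
    forall (n d : nat), (0 < d)%N -> K < n%:R / d%:R ->
    forall (T : finType) (e : rel T),
      simple_graph e -> #|T| = n -> mindeg e = d ->
      ~ has_Kt_l_immersion e (Num.truncn (c * d%:R)) 3 ->
      let m : R := 2 / eps1 * (ln (15 * n%:R / (eps2 * d%:R))) ^+ 3 in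
      forall x : nat, (0 < x < 100)%N ->
        stg_dense e (d%:R * m ^+ x) ((d ^ 2)%:R * m ^+ x) (d%:R / 2).
Proof.
move=> he1 he2.
have [K [K0 HK]] := bound he1 he2.
exists (1 / 1000), K; split; first by rewrite divr_gt0 ?ltr01 ?ltr0n.
move=> n d dpos HnK T e [esy eir] HT Hmd Himm m x /andP [x0 x100].
have dR : (0:R) < d%:R by rewrite ltr0n.
have [m1 Hm] := HK _ HnK.
have Heq : 15 * n%:R / (eps2 * d%:R) = 15 * (n%:R / d%:R) / eps2.
  have ne : eps2 != 0 by case/andP: he2 => h _; rewrite gt_eqF.
  by rewrite invfM; move: (n%:R) (d%:R ^-1) (eps2^-1) => a b c; ring.
have mE : m = 2 / eps1 * (ln (15 * (n%:R / d%:R) / eps2)) ^+ 3 by rewrite /m Heq.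
have HM := Hm x x100.
rewrite -mE in HM m1.
set M := m ^+ x in HM *.
have M1 : 1 <= M by apply: exprn_ege1.
set L := (Num.truncn M).+1.
have ML : M <= L%:R by apply: ltW; apply: truncnS_gt.
have LM : L%:R <= 2 * M.
  have h : (Num.truncn M)%:R <= M by rewrite truncn_le (le_trans ler01 M1).
  by rewrite /L -addn1 natrD; lra.
have hL : (0 < L)%N by [].
have hn : (1024 * (d * (L * (L * L))) <= #|T|)%N.
  rewrite HT -(ler_nat R) !natrM.
  have L0 : 0 <= L%:R :> R by [].
  have M0 : 0 <= M by apply: le_trans M1.
  have hL3 : L%:R * (L%:R * L%:R) <= 8 * M ^+ 3 :> R.
    have -> : 8 * M ^+ 3 = (2 * M) * ((2 * M) * (2 * M)) by ring.
    have LL0 : 0 <= L%:R * L%:R :> R by apply: mulr_ge0.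
    have LL : L%:R * L%:R <= (2 * M) * (2 * M) by apply: ler_pM.
    by apply: ler_pM.
  apply: (@le_trans _ _ (1024%:R * (d%:R * (8 * M ^+ 3)))).
    by rewrite ler_pM2l ?ltr0n // ler_pM2l.
  have -> : n%:R = d%:R * (n%:R / d%:R) :> R by rewrite mulrC divfK // gt_eqF.
  have -> : 1024%:R * (d%:R * (8 * M ^+ 3)) = d%:R * (8192 * M ^+ 3) :> R by ring.
  by rewrite ler_pM2l.
set t := Num.truncn (1 / 1000 * d%:R) in Himm.
have c0 : (0:R) <= 1 / 1000 by apply: divr_ge0; [exact: ler01 | exact: ler0n].
have h : t%:R <= 1 / 1000 * d%:R :> R.
  by rewrite truncn_le; apply: mulr_ge0 c0 (ler0n _ _).
have ht : (1000 * t <= d)%N.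
  rewrite -(ler_nat R) natrM.
  lra.
move=> U W WE HU HW.
rewrite leNgt; apply/negP => Hlt.
have HU' : (#|U| <= d * L)%N.
  by rewrite -(ler_nat R) natrM; apply: le_trans HU _; rewrite ler_pM2l.
have HW' : (#|W| <= d * d * L)%N.
  rewrite -(ler_nat R) natrM; apply: le_trans HW _; rewrite mulnn ler_pM2l //.
  by rewrite ltr0n expn_gt0 dpos.
have Hmin : forall v, (d <= deg e v)%N by move=> v; rewrite -Hmd; apply: mindeg_le.
case t0: (t == 0)%N.
  by move/eqP: t0 => t0; apply: Himm; rewrite t0; apply: imm0.
have htpos : (0 < t)%N by rewrite lt0n t0.
apply: Himm.
move: Hlt; rewrite /avgdeg_del; case: eqP => Hb Hlt.
  exfalso.
  have := cardsC U; rewrite Hb addn0 => HUT.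
  exact: (contra_beta0 dpos hL hn HU' HUT).
have bpos : (0:R) < #|~: U|%:R by rewrite ltr0n lt0n; apply/eqP.
have hE : (4 * #|del_edges e W U| < d * #|~: U|)%N by exact: hE_lemma bpos Hlt.
exact: (comb_main esy eir Hmin HU' HW' hL hn ht htpos hE).
Qed.
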